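(* Let $\mathcal{S}=\langle\mathcal{L},\vdash\rangle$ be a logical structure with $\mathcal{L}$ infinite, and let $\varrho\subseteq\mathcal{P}(\mathcal{L})\times\mathcal{L}$ have finite reach. Then the principles gECQ and spECQ both fail in $\langle\mathcal{L},\vdash^\varrho\rangle$ and in $\langle\mathcal{L},\vdash^{p\varrho}\rangle$.
   Context: A logical structure is a pair $\langle\mathcal{L},\vdash\rangle$ with $\mathcal{L}$ a set and $\vdash\subseteq\mathcal{P}(\mathcal{L})\times\mathcal{L}$ arbitrary. For $\varrho\subseteq\mathcal{P}(\mathcal{L})\times\mathcal{L}$: $\Gamma\vdash^\varrho\alpha$ iff there is $\Delta\subseteq\Gamma$ with $(\Delta,\alpha)\in\varrho$ and $\Delta\vdash\alpha$; $\Gamma\vdash^{p\varrho}\alpha$ iff there is a nonempty $\Delta\subseteq\Gamma$ with $(\Delta,\alpha)\in\varrho$ and $\Delta\vdash\alpha$. $\varrho$ has finite reach if for every $\Delta\subseteq\mathcal{L}$ the set $\{\alpha\mid(\Delta,\alpha)\in\varrho\}$ is finite. For a logical structure $\langle\mathcal{L},\vdash'\rangle$: gECQ holds if for every $\alpha\in\mathcal{L}$ there is $\beta\in\mathcal{L}$ such that $\{\alpha,\beta\}\vdash'\gamma$ for all $\gamma\in\mathcal{L}$; spECQ holds if for every $\Gamma\subsetneq\mathcal{L}$ there is $\alpha\in\mathcal{L}$ such that $\Gamma\cup\{\alpha\}\subsetneq\mathcal{L}$ and $\Gamma\cup\{\alpha\}\vdash'\beta$ for all $\beta\in\mathcal{L}$.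 *)

(* Defs.v *)
From Stdlib Require Import List.

Definition subset {L : Type} (A B : L -> Prop) : Prop := forall x, A x -> B x.

Definition finite_set {L : Type} (A : L -> Prop) : Prop :=
  exists l : list L, forall x, A x -> In x l.

Definition infinite_type (L : Type) : Prop := ~ finite_set (fun _ : L => True).

Definition cons_rel (L : Type) := (L -> Prop) -> L -> Prop.

Definition restr {L : Type} (rho : cons_rel L) (vd : cons_rel L) : cons_rel L :=
  fun Gamma alpha => exists Delta, subset Delta Gamma /\ rho Delta alpha /\ vd Delta alpha.

Definition prestr {L : Type} (rho : cons_rel L) (vd : cons_rel L) : cons_rel L :=
  fun Gamma alpha => exists Delta, (exists d, Delta d) /\ subset Delta Gamma
                                   /\ rho Delta alpha /\ vd Delta alpha.

Definition finite_reach {L : Type} (rho : cons_rel L) : Prop :=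
  forall Delta : L -> Prop, finite_set (fun alpha => rho Delta alpha).

Definition pair_set {L : Type} (a b : L) : L -> Prop := fun x => x = a \/ x = b.
Definition add_elt {L : Type} (G : L -> Prop) (a : L) : L -> Prop := fun x => G x \/ x = a.

Definition proper_full {L : Type} (G : L -> Prop) : Prop := exists b, ~ G b.

Definition gECQ {L : Type} (vd : cons_rel L) : Prop :=
  forall alpha, exists beta, forall gamma, vd (pair_set alpha beta) gamma.

Definition spECQ {L : Type} (vd : cons_rel L) : Prop :=
  forall Gamma : L -> Prop, proper_full Gamma ->
    exists alpha, proper_full (add_elt Gamma alpha) /\
                  forall beta, vd (add_elt Gamma alpha) beta.

(* Main.v *)
Require Import Defs.
From Stdlib Require Import List Classical FunctionalExtensionality PropExtensionality.

Lemma sub_pair {L : Type} (Delta : L -> Prop) a b :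
  subset Delta (pair_set a b) ->
  Delta = (fun _ => False) \/ Delta = (fun x => x = a) \/
  Delta = (fun x => x = b) \/ Delta = pair_set a b.
Proof.
  intros H.
  destruct (classic (Delta a)) as [Ha|Ha]; destruct (classic (Delta b)) as [Hb|Hb].
  - right; right; right. extensionality x; apply propositional_extensionality.
    split; [apply H|]. intros [->| ->]; auto.
  - right; left. extensionality x; apply propositional_extensionality.
    split; [|intros ->; auto]. intros Hx. destruct (H x Hx) as [->| ->]; tauto.
  - right; right; left. extensionality x; apply propositional_extensionality.
    split; [|intros ->; auto]. intros Hx. destruct (H x Hx) as [->| ->]; tauto.
  - left. extensionality x; apply propositional_extensionality.
    split; [|tauto]. intros Hx. destruct (H x Hx) as [->| ->]; tauto.
Qed.

Lemma key {L : Type} (rho : cons_rel L) a b :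
  infinite_type L -> finite_reach rho ->
  ~ (forall g, exists Delta, subset Delta (pair_set a b) /\ rho Delta g).
Proof.
  intros Hinf Hfr H.
  destruct (Hfr (fun _ => False)) as [l1 H1].
  destruct (Hfr (fun x => x = a)) as [l2 H2].
  destruct (Hfr (fun x => x = b)) as [l3 H3].
  destruct (Hfr (pair_set a b)) as [l4 H4].
  apply Hinf. exists (l1 ++ l2 ++ l3 ++ l4). intros g _.
  destruct (H g) as [D [HD Hr]].
  repeat rewrite in_app_iff.
  destruct (sub_pair D a b HD) as [E|[E|[E|E]]]; subst D; auto 6.
Qed.

Lemma nonempty {L : Type} : infinite_type L -> exists x : L, True.
Proof.
  intros H. destruct (classic (exists x : L, True)) as [|Hn]; auto.
  exfalso. apply H. exists nil. intros x _. apply Hn. eauto.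
Qed.

Lemma pre_restr {L : Type} (rho vd : cons_rel L) G a :
  prestr rho vd G a -> restr rho vd G a.
Proof. intros [D [_ [? [? ?]]]]. exists D; auto. Qed.

Theorem corollary3p19 (L : Type) (vd : cons_rel L) (rho : cons_rel L) :
  infinite_type L -> finite_reach rho ->
  ~ gECQ (restr rho vd) /\ ~ spECQ (restr rho vd) /\
  ~ gECQ (prestr rho vd) /\ ~ spECQ (prestr rho vd).
Proof.
  intros Hinf Hfr. destruct (nonempty Hinf) as [x0 _].
  assert (G : ~ gECQ (restr rho vd)).
  { intros Hg. destruct (Hg x0) as [b Hb].
    apply (key rho x0 b Hinf Hfr). intros g.
    destruct (Hb g) as [D [HD [Hr _]]]. eauto. }
  assert (S : ~ spECQ (restr rho vd)).
  { intros Hs. destruct (Hs (fun _ => False)) as [a [_ Ha]].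
    - exists x0; auto.
    - apply (key rho a a Hinf Hfr). intros g.
      destruct (Ha g) as [D [HD [Hr _]]]. exists D; split; auto.
      intros y Hy. destruct (HD y Hy) as [[]| ->]. left; auto. }
  repeat split; auto.
  - intros Hg. apply G. intros a. destruct (Hg a) as [b Hb].
    exists b. intros g. apply pre_restr, Hb.
  - intros Hs. apply S. intros Gm Hp. destruct (Hs Gm Hp) as [a [Ha Hb]].
    exists a; split; auto. intros g. apply pre_restr, Hb.
Qed.
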